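(* Fix integers $2\le k\le n'\le n$, $M=\lceil n/n'\rceil$, $r=n-(M-1)n'$, and consider the $n'$-grouped $(k,n)$ random-grid sharing of a secret bit $s$ described in the context. Let $\vec\lambda=(\lambda_1,\ldots,\lambda_M)$ be a valid partition and suppose $\lambda_j$ share bits (shadow images) are selected from group $j$ for each $j$. For $s\in\{0,1\}$ let $t_s$ be the probability that the logical OR of the selected share bits equals $0$ when the secret bit is $s$. Then $$t_0=\frac{\Pr(\#C(\vec\lambda)=k)}{2^{k-1}}+\sum_{g=1}^{k-1}\frac{\Pr(\#C(\vec\lambda)=g)}{2^g},\qquad t_1=\sum_{g=1}^{k-1}\frac{\Pr(\#C(\vec\lambda)=g)}{2^g},$$ and the contrast of the recovered image is $$\alpha=\frac{t_0-t_1}{1+t_1}=\frac{\Pr(\#C(\vec\lambda)=k)/2^{k-1}}{1+\sum_{g=1}^{k-1}\Pr(\#C(\vec\lambda)=g)/2^g}.$$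
   Context: Basic bits: for a secret bit $s\in\{0,1\}$, $b_1,\ldots,b_{k-1}$ are independent uniform bits and $b_k=s\oplus b_1\oplus\cdots\oplus b_{k-1}$. There is a fixed sequence $c=(c_1,\ldots,c_{n'})\in\{1,\ldots,k\}^{n'}$ in which every value $1,\ldots,k$ occurs. The $n$ share bits are arranged in $M$ groups: groups $1,\ldots,M-1$ have $n'$ positions and group $M$ has $r$ positions. For each group $j$, an independent uniformly random permutation $\sigma_j$ of $\{1,\ldots,n'\}$ is drawn (independent of the $b_i$), and the $\delta$-th position of group $j$ carries the index $c_{\sigma_j(\delta)}$ and the bit $b_{c_{\sigma_j(\delta)}}$ ($\delta\le r$ for group $M$). Position $\delta$ of group $j$ is the share bit of shadow image $(j-1)n'+\delta$; the scheme is applied independently to every pixel, and stacking shadow images computes the OR of their bits (0 = transparent, 1 = opaque). A valid partition is a vector $\vec\lambda=(\lambda_1,\ldots,\lambda_M)$ of non-negative integers with $\max_j\lambda_j\le n'$ and $\lambda_M\le r$. $C(\vec\lambda)$ is the multiset of indices carried by the selected positions (fixed positions, $\lambda_j$ of them in group $j$) and $\#C(\vec\lambda)$ is the number of its distinct elements; probabilities are over all the randomness. The contrast of a recovered image is defined as $(t_0-t_1)/(1+t_1)$, where $t_s$ is the light transmission (probability of a $0$ pixel) of recovered pixels whose secret pixel is $s$. *)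

(* Defs.v *)
From HB Require Import structures.
From mathcomp Require Import all_boot all_order all_algebra all_fingroup.
Set Implicit Arguments. Unset Strict Implicit. Unset Printing Implicit Defensive.
Import Order.TTheory GRing.Theory Num.Theory.

(* Indices 1..k of the paper are represented by 'I_k (index i+1 <-> i).
   Shadow images 1..n by 'I_n (shadow i+1 <-> i); groups 1..M by 'I_M;
   positions 1..n' inside a group by 'I_n'. *)

(* M = ceil(n / n'); for n >= 1, n' >= 1 this is (n-1) %/ n' + 1. *)
Definition Mg (n n' : nat) : nat := (n.-1 %/ n').+1.

(* r = n - (M-1) n' : size of the last group. *)
Definition rg (n n' : nat) : nat := n - (Mg n n').-1 * n'.

Definition grp (n n' : nat) (i : 'I_n) : 'I_(Mg n n') := inord (i %/ n').

Definition pos (n' : nat) (H : 1 < n') (i : nat) : 'I_n' :=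
  Ordinal (ltn_pmod i (ltnW H)).

(* The basic bits: b_1..b_{k-1} are the free bits f, and
   b_k = s xor b_1 xor ... xor b_{k-1}. *)
Definition bitval (k : nat) (s : bool) (f : {ffun 'I_k.-1 -> bool}) (i : 'I_k)
  : bool :=
  oapp (fun j : 'I_k.-1 => f j) (s (+) \big[addb/false]_(j < k.-1) f j)
       (insub (val i) : option 'I_k.-1).

(* Sample space: free bits and one permutation per group, all uniform. *)
Definition Omega (k n n' : nat) : finType :=
  ({ffun 'I_k.-1 -> bool} * {ffun 'I_(Mg n n') -> {perm 'I_n'}})%type.

Definition Pr (R : numFieldType) (T : finType) (P : pred T) : R :=
  #|[set w | P w]|%:R / #|T|%:R.

Definition carried (k n n' : nat) (c : 'I_n' -> 'I_k) (H : 1 < n')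
  (sig : {ffun 'I_(Mg n n') -> {perm 'I_n'}}) (i : 'I_n) : 'I_k :=
  c (sig (grp n' i) (pos H i)).

(* Stacking the selected shadows X gives a transparent (0) pixel:
   the OR of the selected share bits is 0. *)
Definition stack0 (k n n' : nat) (c : 'I_n' -> 'I_k) (H : 1 < n')
  (X : {set 'I_n}) (s : bool) (w : Omega k n n') : bool :=
  [forall i in X, ~~ bitval s w.1 (carried c H w.2 i)].

Definition numC (k n n' : nat) (c : 'I_n' -> 'I_k) (H : 1 < n')
  (X : {set 'I_n}) (w : Omega k n n') : nat :=
  #|[set carried c H w.2 i | i in X]|.

Definition lam (n n' : nat) (X : {set 'I_n}) (j : 'I_(Mg n n')) : nat :=
  #|[set i in X | grp n' i == j]|.

(* Main.v *)
Require Import Defs.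
From mathcomp Require Import all_boot all_order all_algebra all_fingroup.
From mathcomp Require Import zify ring lra.
From HB Require Import structures.
Import Order.TTheory GRing.Theory Num.Theory.

Lemma zero_card (m : nat) (A : {set 'I_m}) :
  #|[set f : {ffun 'I_m -> bool} | [forall j in A, ~~ f j]]| = 2 ^ (m - #|A|).
Proof.
have -> : [set f : {ffun 'I_m -> bool} | [forall j in A, ~~ f j]]
   = [set f in pffun_on false (~: A) predT].
  apply/setP=> f; rewrite !inE; apply/forallP/pffun_onP.
    move=> h; split; last by move=> ? _.
    apply/subsetP=> j; rewrite !inE; apply: contra => jA.
    by have := h j; rewrite jA /=; case: (f j).
  move=> [/subsetP h _] j; apply/implyP=> jA.
  apply/negP=> fj; have := h j; rewrite !inE fj jA => /(_ isT) //.
rewrite cardsE card_pffun_on card_bool.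
have := cardsC A; rewrite card_ord => e; congr (_ ^ _); move: e; set a := #|A|; set b := #|~: A|; move=> <-; by rewrite addKn.
Qed.

Definition xorf {k : nat} (f : {ffun 'I_k -> bool}) := \big[addb/false]_(j < k) f j.

Lemma flip_xor k (j0 : 'I_k) (f : {ffun 'I_k -> bool}) :
  xorf [ffun j => if j == j0 then ~~ f j else f j] = ~~ xorf f.
Proof.
rewrite /xorf (bigD1 j0) // [in RHS](bigD1 j0) //= ffunE eqxx addNb; congr (~~ (_ (+) _)).
by apply: eq_bigr => j /negbTE jj; rewrite ffunE jj.
Qed.

Lemma count_f (k : nat) (s : bool) (S : {set 'I_k.+1}) :
  #|[set f : {ffun 'I_k -> bool} | [forall x in S, ~~ @bitval k.+1 s f x]]| =
  if #|S| < k.+1 then 2 ^ (k - #|S|) else ~~ s.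
Proof.
set S' := [set j : 'I_k | lift ord_max j \in S].
have bl : forall f j, @bitval k.+1 s f (lift ord_max j) = f j.
  move=> f j; rewrite /bitval /=.
  have -> : bump k j = j by rewrite /bump leqNgt (ltn_ord j).
  rewrite (@insubT _ (fun x => x < k) _ (nat_of_ord j) (ltn_ord j)) /=; congr (f _); exact: val_inj.
have bm : forall f, @bitval k.+1 s f ord_max = s (+) xorf f.
  by move=> f; rewrite /bitval /= insubF // ltnn.
have eqv : forall f, [forall x in S, ~~ @bitval k.+1 s f x] =
    [forall j in S', ~~ f j] && ((ord_max \in S) ==> ~~ (s (+) xorf f)).
  move=> f; apply/forallP/andP.
    move=> h; split.
      apply/forallP=> j; apply/implyP; rewrite inE => hj.
      by have := h (lift ord_max j); rewrite hj bl.
    by apply/implyP=> hm; have := h ord_max; rewrite hm bm.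
  move=> [/forallP h1 /implyP h2] x; apply/implyP=> hx.
  case: (unliftP ord_max x) hx => [j ->|->] hx.
    by have := h1 j; rewrite inE -bl hx.
  by rewrite bm h2.
have cS : #|S| = (ord_max \in S) + #|S'|.
  rewrite (cardsD1 ord_max S); congr (_ + _).
  have -> : S :\ ord_max = [set lift ord_max j | j in S'].
    apply/setP=> x; rewrite !inE.
    case: (unliftP ord_max x) => [j ->|->].
      rewrite eq_sym neq_lift /=; apply/idP/imsetP.
        by move=> h; exists j; rewrite // inE.
      by move=> [j' ]; rewrite inE => h /lift_inj ->.
    rewrite eqxx /=; apply/esym/imsetP => [[j _]] e; have := neq_lift ord_max j; by rewrite -e eqxx.
  by rewrite card_imset //; apply: lift_inj.
have cS' : (#|S'| <= k)%N by have := max_card S'; rewrite card_ord.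
under eq_finset => f do rewrite eqv.
case hm: (ord_max \in S); last first.
  rewrite cS hm add0n ltnS cS'.
  under eq_finset => f do rewrite andbT.
  exact: zero_card.
rewrite cS hm add1n ltnS.
set Z := [set f : {ffun 'I_k -> bool} | [forall j in S', ~~ f j]].
have cZ : #|Z| = 2 ^ (k - #|S'|) by apply: zero_card.
have -> : [set f : {ffun 'I_k -> bool} | [forall j in S', ~~ f j] && (true ==> ~~ (s (+) xorf f))]
   = Z :&: [set f | xorf f == s].
  by apply/setP=> f; rewrite !inE /=; case: (s); case: (xorf f).
case: ltnP => hlt.
  have [j0 j0S] : exists j0, j0 \notin S'.
    apply/existsP; apply: contraLR hlt; rewrite negb_exists => /forallP h.
    rewrite -leqNgt; have -> : S' = setT by apply/setP=> j; rewrite in_setT; apply: negbNE; exact: h.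
    by rewrite cardsT card_ord.
  set fl := fun f : {ffun 'I_k -> bool} => [ffun j => if j == j0 then ~~ f j else f j].
  have flK : involutive fl.
    by move=> f; apply/ffunP=> j; rewrite !ffunE; case: (j == j0); rewrite ?negbK.
  have e1 : Z :\: [set f | xorf f == s] = fl @: (Z :&: [set f | xorf f == s]).
    apply/setP=> f; rewrite !inE; apply/andP/imsetP.
      move=> [h1 h2]; exists (fl f); last by rewrite flK.
      rewrite !inE flip_xor; apply/andP; split.
        apply/forallP=> j; apply/implyP=> hj; rewrite ffunE.
        have -> : (j == j0) = false by apply/negbTE; apply: contraNneq j0S => <-.
        by move/forallP: h2 => /(_ j) /implyP /(_ hj).
      by case: (xorf f) h1 {h2}; case: (s).
    move=> [g]; rewrite !inE => /andP [h2 h1] ->; rewrite flip_xor; split.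
      by case: (xorf g) h1; case: (s).
    apply/forallP=> j; apply/implyP=> hj; rewrite ffunE.
    have -> : (j == j0) = false by apply/negbTE; apply: contraNneq j0S => <-.
    by move/forallP: h2 => /(_ j) /implyP /(_ hj).
  have := cardsID [set f | xorf f == s] Z.
  rewrite e1 card_imset; last by apply: inv_inj.
  rewrite cZ; move: hlt; set a := #|_ :&: _|; set b := #|S'| => hlt.
  have -> : (k - b = (k - b.+1).+1)%N by rewrite subnSK.
  rewrite expnS => e; lia.
have hS : S' = setT.
  by apply/eqP; rewrite eqEcard subsetT cardsT card_ord.
have hZ : Z = [set [ffun=> false]].
  apply/setP=> f; rewrite !inE hS; apply/forallP/eqP.
    by move=> h; apply/ffunP=> j; rewrite ffunE; have := h j; rewrite inE /=; case: (f j).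
  by move=> e j; rewrite e ffunE implybT.
have x0 : xorf ([ffun=> false] : {ffun 'I_k -> bool}) = false.
  by rewrite /xorf big1 // => j _; rewrite ffunE.
rewrite hZ; case: (s).
  rewrite (_ : _ :&: _ = set0) ?cards0 //.
  by apply/setP=> f; rewrite !inE; apply/andP=> [[/eqP -> ]]; rewrite x0.
rewrite (_ : _ :&: _ = [set [ffun=> false]]) ?cards1 //.
by apply/setP=> f; rewrite !inE; apply/andP/idP => [[]//|/eqP ->]; rewrite x0.
Qed.
Lemma card_pair (T1 T2 : finType) (P : pred (T1 * T2)) :
  #|[set w | P w]| = (\sum_(b : T2) #|[set a : T1 | P (a, b)]|)%N.
Proof.
rewrite -sum1dep_card.
under [RHS]eq_bigr => b _ do rewrite -sum1dep_card.
rewrite (exchange_big_dep xpredT) //= pair_big_dep /=.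
by apply: eq_bigl => -[a b].
Qed.

Local Open Scope ring_scope.

Lemma sum_pick (R : numFieldType) (F : nat -> R) a b v :
  \sum_(a <= g < b) (if g == v then F g else 0) = if (a <= v < b)%N then F v else 0.
Proof.
rewrite -big_mkcond /=; case: ifP => h.
  rewrite -big_filter (@eq_filter _ _ (pred1 v)) //.
  by rewrite filter_pred1_uniq ?iota_uniq ?mem_index_iota // big_seq1.
apply: big1_seq => g /andP[/eqP -> ]; by rewrite mem_index_iota h.
Qed.

Lemma persig (R : realFieldType) k (s : bool) (v : nat) (D : R) :
  (0 < v <= k.+1)%N ->
  (if v < k.+1 then 2 ^ (k - v) else nat_of_bool (~~ s))%N%:R / D
  = (~~ s)%:R * (((v == k.+1) * 2 ^ k)%N%:R / D / 2 ^+ k)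
    + \sum_(1 <= g < k.+1) ((v == g) * 2 ^ k)%N%:R / D / 2 ^+ g.
Proof.
move=> /andP[v0 vk].
rewrite (eq_bigr (fun g => if g == v then (2 ^ k)%:R / D / 2 ^+ g else 0)); last first.
  by move=> g _; rewrite eq_sym; case: eqP => _; rewrite ?mul1n ?mul0n ?mul0r.
rewrite sum_pick v0 /=.
have h2 : forall m, (2 : R) ^+ m != 0 by move=> m; rewrite expf_neq0 // pnatr_eq0.
case: ltnP => h.
  have -> : (v == k.+1) = false by apply/negbTE; rewrite neq_ltn h.
  rewrite mul0n mul0r mul0r mulr0 add0r.
  have hv : (v <= k)%N by [].
  rewrite -{2}(subnK hv) expnD natrM (natrX _ 2 v) [_ * 2 ^+ v / D]mulrAC mulfK //.
have -> : v = k.+1 by apply/eqP; rewrite eqn_leq vk h.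
by rewrite eqxx mul1n natrX addr0 [2 ^+ k / D / _]mulrAC divff // mul1r.
Qed.

Lemma forall_imset (T U : finType) (g : T -> U) (X : {set T}) (p : pred U) :
  [forall i in X, p (g i)] = [forall x in [set g i | i in X], p x].
Proof.
apply/forallP/forallP => h.
  move=> x; apply/implyP => /imsetP [i iX ->]; by have := h i; rewrite iX.
move=> i; apply/implyP => iX; have := h (g i); rewrite imset_f //.
Qed.

Theorem theorem1 (R : realFieldType) (k n' n : nat)
  (hk : (1 < k)%N) (hkn : (k <= n')%N) (hn : (n' <= n)%N)
  (c : 'I_n' -> 'I_k) (hc : forall v : 'I_k, exists d : 'I_n', c d = v)
  (X : {set 'I_n}) (hX : X != set0) :
  let H := leq_trans hk hkn in
  let t (s : bool) : R := Pr R (stack0 c H X s) in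
  let pC (g : nat) : R := Pr R (fun w : Omega k n n' => numC c H X w == g) in
  [/\ t false = pC k / 2 ^+ k.-1 + \sum_(1 <= g < k) pC g / 2 ^+ g,
      t true = \sum_(1 <= g < k) pC g / 2 ^+ g
    & (t false - t true) / (1 + t true)
      = (pC k / 2 ^+ k.-1) / (1 + \sum_(1 <= g < k) pC g / 2 ^+ g)].
Proof.
move: hk hkn c hc; case: k => [|k] // hk hkn c hc.
move=> H t pC.
pose nu (sig : {ffun 'I_(Mg n n') -> {perm 'I_n'}}) := #|[set carried c H sig i | i in X]|.
set D : R := (2 ^ k * #|{ffun 'I_(Mg n n') -> {perm 'I_n'}}|)%N%:R.
have cardO : #|Omega k.+1 n n'| = (2 ^ k * #|{ffun 'I_(Mg n n') -> {perm 'I_n'}}|)%N.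
  by rewrite card_prod card_ffun card_bool card_ord.
have tE : forall s, t s = (\sum_sig (if nu sig < k.+1 then 2 ^ (k - nu sig) else nat_of_bool (~~ s)))%N%:R / D.
  move=> s; rewrite /t /Pr cardO -/D; congr (_%:R / _).
  rewrite card_pair; apply: eq_bigr => sig _; rewrite -count_f.
  apply: eq_card => f; rewrite !inE /stack0 /=.
  apply/forallP/forallP => h.
    move=> x; apply/implyP => /imsetP [i iX ->]; by have := h i; rewrite iX.
  move=> i; apply/implyP => iX; have := h (carried c H sig i); rewrite imset_f //.
have pE : forall g, pC g = (\sum_sig ((nu sig == g) * 2 ^ k))%N%:R / D.
  move=> g; rewrite /pC /Pr cardO -/D; congr (_%:R / _).
  rewrite card_pair; apply: eq_bigr => sg _.
  rewrite /numC /=; rewrite -/(nu sg); case: (nu sg == g).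
    by rewrite mul1n cardsT card_ffun card_bool card_ord.
  by rewrite mul0n (_ : [set _ | false] = set0) ?cards0 //; apply/setP => f; rewrite !inE.
have nuB : forall sig, (0 < nu sig <= k.+1)%N.
  move=> sig; apply/andP; split.
    case/set0Pn: hX => x xX; rewrite card_gt0; apply/set0Pn; exists (carried c H sig x).
    exact: imset_f.
  by have := max_card [set carried c H sig i | i in X]; rewrite card_ord.
have gen : forall s, t s = (~~ s)%:R * (pC k.+1 / 2 ^+ k) + \sum_(1 <= g < k.+1) pC g / 2 ^+ g.
  move=> s; rewrite tE; under [X in _ = _ + X]eq_bigr => g _ do rewrite pE.
  rewrite pE.
  rewrite !natr_sum !mulr_suml mulr_sumr.
  under [X in _ = _ + X]eq_bigr => g _ do rewrite natr_sum !mulr_suml.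
  rewrite (exchange_big_dep xpredT) //= -big_split /=.
  apply: eq_bigr => sig _; exact: persig.
have t0 := gen false; have t1 := gen true.
rewrite /= mul1r in t0; rewrite /= mul0r add0r in t1.
split => //.
by rewrite t0 t1 addrK.
Qed.
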